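(* Let $p$ be an odd prime, $h\ge 1$, $f(x,z)\in\mathbb{F}_{p^h}[x,z]$, and let $\mathcal{S}\subset\mathbb{A}^3$ be the affine surface $y^p-y=f(x,z)$. For each $\gamma\in\mathbb{F}_{p^h}$ with $f(x,\gamma)$ non-constant, let $\mathcal{Z}_\gamma=V(y^p-y-f(x,z),\,z-\gamma)$, viewed as a plane curve $y^p-y=f(x,\gamma)$ in the plane $z=\gamma$. Let $\eta$ be a positive integer and $$\Gamma=\{\gamma\in\mathbb{F}_{p^h}: f(x,\gamma)\text{ non-constant and } \#\pi_x(\mathcal{Z}_\gamma(\mathbb{F}_{p^h}))\ge\eta\}.$$ Assume there are non-negative integers $\nu,\rho_1,\rho_2,\rho_3$ such that (1) $\deg(\mathcal{Z}_\gamma)\le\nu$ for all $\gamma\in\Gamma$; (2) $2\le\rho_1\le\eta$, $2\le\rho_2\le p$, and $0\le\rho_3\le p^2-1$; (3) there are at least $\rho_3+1$ values $\gamma\in\Gamma$ with $\#\mathcal{Z}_\gamma(\mathbb{F}_{p^h})\ge\nu(\eta-\rho_1+p-\rho_2)+1$. Let $T=\{(x,y,z)\in\mathcal{S}(\mathbb{F}_{p^h}): z\in\Gamma\}$ and $$V=\langle x^iy^jz^k: 0\le i\le\eta-\rho_1,\ 0\le j\le p-\rho_2,\ 0\le k\le\rho_3\rangle\subset\mathbb{F}_{p^h}[x,y,z],$$ and let $C=C(V,T)$. Then $C$ has hierarchical locality in the following sense: for every position $i$, corresponding to a point $P_i=(a,b,c)\in T$, (a) the lower code $C_{2,i}$ (the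 puncturing of $C$ to the $p$ positions of the fiber $\{(a,b+\delta,c):\delta\in\mathbb{F}_p\}\subset T$ of $\pi_{x,z}$ through $P_i$) has dimension at most $s_2=p-\rho_2+1$ and minimum distance at least $d_2=\rho_2$; (b) the middle code $C_{1,i}$ (the puncturing of $C$ to the positions of the points of $T$ with $z$-coordinate $c$, i.e. the points of $\mathcal{Z}_c(\mathbb{F}_{p^h})$) has dimension at most $s_1=(\eta-\rho_1+1)(p-\rho_2+1)$ and minimum distance at least $d_1=\rho_1\rho_2$, and contains the support of $C_{2,i}$. Furthermore the evaluation map on $V$ is injective, so $\dim C=(\eta-\rho_1+1)(p-\rho_2+1)(\rho_3+1)$.
   Context: A linear code of length $n$ over $\mathbb{F}_q$ is a subspace of $\mathbb{F}_q^n$; its minimum distance is the minimum Hamming distance between distinct codewords. For $I=\{i_1,\dots,i_s\}\subset\{1,\dots,n\}$, the punctured code $C|_I=\{(c_{i_1},\dots,c_{i_s}):(c_1,\dots,c_n)\in C\}$. For an ordered finite set $T=\{P_1,\dots,P_n\}$ of points and a vector space $V$ of polynomial functions, the evaluation code is $C(V,T)=\{(g(P_1),\dots,g(P_n)):g\in V\}$ (the ordering of $T$ is arbitrary). $\pi_x(a,b,c)=a$, $\pi_z(a,b,c)=c$, $\pi_{x,z}(a,b,c)=(a,c)$ are the coordinate projections on $\mathbb{A}^3$. $\deg(\mathcal{Z}_\gamma)$ denotes the degree of the plane curve $y^p-y=f(x,\gamma)$. *)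

(* Defs.v *)
From HB Require Import structures.
From mathcomp Require Import all_boot all_order all_algebra all_field.
Set Implicit Arguments. Unset Strict Implicit. Unset Printing Implicit Defensive.
Import GRing.Theory.
Local Open Scope ring_scope.

(* Bivariate polynomials f(x,z) are represented as f : {poly {poly F}},
   f = \sum_k c_k(x) z^k : the outer variable is z, the inner one is x. *)

Definition fsec (F : fieldType) (f : {poly {poly F}}) (g : F) : {poly F} :=
  f.[g%:P].

Definition nonconst (F : fieldType) (q : {poly F}) : bool := (1 < size q)%N.

(* defining polynomial y^p - y - g(x) of the plane curve, as a polynomial
   in y with coefficients in F[x] *)
Definition curve_poly (F : fieldType) (p : nat) (g : {poly F}) : {poly {poly F}} :=
  'X^p - 'X - g%:P.

Definition totdeg (F : fieldType) (q : {poly {poly F}}) : nat :=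
  \max_(i < size q) addn i (size (nth 0%R q i)).-1.

Definition degZ (F : fieldType) (p : nat) (f : {poly {poly F}}) (g : F) : nat :=
  totdeg (curve_poly p (fsec f g)).

Definition Zpts (F : finFieldType) (p : nat) (f : {poly {poly F}}) (g : F)
  : {set F * F} :=
  [set ab | ab.2 ^+ p - ab.2 == (fsec f g).[ab.1]].

Definition Gamma (F : finFieldType) (p : nat) (f : {poly {poly F}}) (eta : nat)
  : {set F} :=
  [set g | nonconst (fsec f g) && (eta <= #|[set ab.1 | ab in Zpts p f g]|)%N].

(* T = {(x,y,z) in S(F) : z in Gamma} ; a point is ((x,y),z) *)
Definition Tset (F : finFieldType) (p : nat) (f : {poly {poly F}}) (eta : nat)
  : {set F * F * F} :=
  [set P | (P.1.2 ^+ p - P.1.2 == (fsec f P.2).[P.1.1]) && (P.2 \in Gamma p f eta)].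

(* Positions of the code: 'I_#|T|, position t corresponds to point enum_val t. *)

Definition mono_ev (F : finFieldType) (T : {set F * F * F}) (i j k : nat)
  : 'rV[F]_#|T| :=
  \row_t (let P := enum_val t in P.1.1 ^+ i * P.1.2 ^+ j * P.2 ^+ k).

Definition expbox (a b c : nat) : seq (nat * nat * nat) :=
  [seq (ij, k) | ij <- [seq (i, j) | i <- iota 0 a.+1, j <- iota 0 b.+1],
                  k <- iota 0 c.+1].

Definition code (F : finFieldType) (T : {set F * F * F}) (a b c : nat)
  : {vspace 'rV[F]_#|T|} :=
  <<[seq mono_ev T e.1.1 e.1.2 e.2 | e <- expbox a b c]>>%VS.

Definition evalV (F : finFieldType) (a b c : nat)
  (cf : {ffun 'I_a.+1 * 'I_b.+1 * 'I_c.+1 -> F}) (P : F * F * F) : F :=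
  \sum_(e : 'I_a.+1 * 'I_b.+1 * 'I_c.+1)
     cf e * P.1.1 ^+ e.1.1 * P.1.2 ^+ e.1.2 * P.2 ^+ e.2.

Definition punct (F : fieldType) (n : nat) (I : {set 'I_n}) (v : 'rV[F]_n)
  : 'rV[F]_#|I| :=
  \row_j v 0 (enum_val j).

Definition pcode (F : fieldType) (n : nat) (C : {vspace 'rV[F]_n}) (I : {set 'I_n})
  : {vspace 'rV[F]_#|I|} :=
  (linfun (punct I) @: C)%VS.

Definition hdist (F : fieldType) (n : nat) (u v : 'rV[F]_n) : nat :=
  #|[set t | u 0 t != v 0 t]|.

Definition min_dist_ge (F : fieldType) (n : nat) (C : {vspace 'rV[F]_n}) (d : nat)
  : Prop :=
  forall u v, u \in C -> v \in C -> u != v -> (d <= hdist u v)%N.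

Definition fiberpos (F : finFieldType) (p : nat) (T : {set F * F * F})
  (t0 : 'I_#|T|) : {set 'I_#|T|} :=
  let P := enum_val t0 in
  [set t | enum_val t \in [set (P.1.1, P.1.2 + (val k)%:R, P.2) | k : 'I_p]].

Definition planepos (F : finFieldType) (T : {set F * F * F}) (t0 : 'I_#|T|)
  : {set 'I_#|T|} :=
  [set t | (enum_val t).2 == (enum_val t0).2].

(* Main.v *)
Require Import Defs.
From HB Require Import structures.
From mathcomp Require Import all_boot all_order all_algebra all_field.
Set Implicit Arguments. Unset Strict Implicit. Unset Printing Implicit Defensive.
Import GRing.Theory.
Local Open Scope ring_scope.

Section PolyAux.
Variable F : finFieldType.

Lemma coef_sumX (I : finType) (P : pred I) (c : I -> F) (d : I -> nat) (m : nat) :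
  (\sum_(e | P e) c e *: 'X^(d e))`_m = \sum_(e | P e && (d e == m)) c e.
Proof.
rewrite coef_sum big_mkcondr /=; apply: eq_bigr => e _.
by rewrite coefZ coefXn eq_sym; case: (d e == m); rewrite ?mulr1 ?mulr0.
Qed.

Lemma horner_sumX (I : finType) (P : pred I) (c : I -> F) (d : I -> nat) x :
  (\sum_(e | P e) c e *: 'X^(d e)).[x] = \sum_(e | P e) c e * x ^+ d e.
Proof.
by rewrite horner_sum; apply: eq_bigr => e _; rewrite hornerZ hornerXn.
Qed.

Lemma size_sumX (I : finType) (P : pred I) (c : I -> F) (d : I -> nat) n :
  (forall e, P e -> (d e <= n)%N) ->
  (size (\sum_(e | P e) c e *: 'X^(d e))%R <= n.+1)%N.
Proof.
move=> H; apply: (leq_trans (size_sum _ _ _)).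
apply/bigmax_leqP => e Pe.
by apply: leq_trans (size_scale_leq _ _) _; rewrite size_polyXn ltnS H.
Qed.

Lemma roots_gt (q : {poly F}) n (A : {pred F}) :
  (size q <= n.+1)%N -> (n < #|A|)%N -> {in A, forall x, root q x} -> q = 0.
Proof.
move=> sq cA rA; apply/eqP; apply: contraTT cA => q0.
rewrite -leqNgt cardE.
have := max_poly_roots q0 (rs := enum A).
rewrite enum_uniq => /(_ _ isT).
have -> : all (root q) (enum A) by apply/allP => x; rewrite mem_enum; apply: rA.
by move=> /(_ isT) h; rewrite -ltnS (leq_trans h).
Qed.

Lemma roots_card (q : {poly F}) n :
  q != 0 -> (size q <= n.+1)%N -> (#|[pred x | root q x]| <= n)%N.
Proof.
move=> q0 sq; rewrite leqNgt; apply/negP => h.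
by move/eqP: q0; apply; apply: (roots_gt sq h) => x.
Qed.

End PolyAux.

Section Char.
Variables (F : finFieldType) (p : nat).
Hypothesis chp : p \in [pchar F].

Lemma natr_ord_inj (k1 k2 : 'I_p) : (k1%:R = k2%:R :> F) -> k1 = k2.
Proof.
wlog le12 : k1 k2 / (k1 <= k2)%N.
  move=> W h; case: (leqP k1 k2) => l; first exact: W.
  by symmetry; apply: W (ltnW l) _.
move=> /eqP; rewrite eq_sym -subr_eq0 -natrB // -(dvdn_pcharf chp) => dv.
apply: val_inj => /=; apply/eqP; rewrite eqn_leq le12 /= -subn_eq0.
have lt : (k2 - k1 < p)%N by apply: leq_ltn_trans (leq_subr _ _) (ltn_ord _).
apply: contraTT dv => nz; rewrite gtnNdvd // lt0n.
by [].

Qed.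

Lemma frob_shift (y : F) (k : nat) : (y + k%:R) ^+ p - (y + k%:R) = y ^+ p - y.
Proof.
have := pFrobenius_autD_comm chp (mulrC y k%:R).
rewrite (pFrobenius_aut_nat chp) !pFrobenius_autE => ->.
by rewrite opprD addrACA subrr addr0.
Qed.

End Char.

Lemma ev_surj (X : finType) (A : {set X}) x : x \in A -> exists t : 'I_#|A|, enum_val t = x.
Proof. by move=> xA; exists (enum_rank_in xA x); rewrite enum_rankK_in. Qed.

Lemma card_positions (F : fieldType) (X : finType) (T : {set X}) (I : {set 'I_#|T|})
  (g : X -> F) (B : {set X}) :
  (forall P, P \in B -> exists2 t, t \in I & enum_val t = P) ->
  (forall P, P \in B -> g P != 0) ->
  (#|B| <= #|[set s : 'I_#|I| | g (enum_val (enum_val s)) != 0%R]|)%N.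
Proof.
move=> HI Hg.
apply: leq_trans (leq_imset_card (fun s : 'I_#|I| => enum_val (enum_val s)) _).
apply: subset_leq_card; apply/subsetP => P PB.
have [t tI eP] := HI P PB.
have [s es] := ev_surj tI.
by apply/imsetP; exists s; rewrite ?inE es eP ?Hg.
Qed.

Lemma fiber_count (F : finFieldType) (p b : nat) (chp : p \in [pchar F])
  (q : {poly F}) (y0 : F) :
  q != 0 -> (size q <= b.+1)%N ->
  (p - b <= #|[set k : 'I_p | q.[y0 + k%:R] != 0%R]|)%N.
Proof.
move=> q0 sq.
set Z := [set k : 'I_p | q.[y0 + k%:R] == 0].
have cZ : (#|Z| <= b)%N.
  rewrite -(card_imset _ (f := fun k : 'I_p => y0 + k%:R)); last first.
    by move=> k1 k2 /addrI /(natr_ord_inj chp).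
  apply: leq_trans (roots_card q0 sq); apply: subset_leq_card.
  apply/subsetP => x /imsetP [k]; rewrite inE => /eqP qk ->.
  by rewrite inE /root qk.
have -> : [set k : 'I_p | q.[y0 + k%:R] != 0] = ~: Z.
  by apply/setP => k; rewrite !inE.
have := cardsC Z; rewrite card_ord => hp.
by rewrite -{1}hp leq_subLR leq_add2r.
Qed.

Section CfPolys.
Variables (F : finFieldType) (a b c : nat).
Local Notation E := ('I_a.+1 * 'I_b.+1 * 'I_c.+1)%type.
Variable cf : {ffun E -> F}.

Definition ypoly (x z : F) : {poly F} :=
  \sum_(e : E) (cf e * x ^+ e.1.1 * z ^+ e.2) *: 'X^(e.1.2).
Definition xpoly (z : F) (j : nat) : {poly F} :=
  \sum_(e : E | e.1.2 == j :> nat) (cf e * z ^+ e.2) *: 'X^(e.1.1).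
Definition zpoly (i j : nat) : {poly F} :=
  \sum_(e : E | (e.1.2 == j :> nat) && (e.1.1 == i :> nat)) cf e *: 'X^(e.2).

Lemma evalV_ypoly P : evalV cf P = (ypoly P.1.1 P.2).[P.1.2].
Proof.
rewrite /ypoly horner_sumX /evalV; apply: eq_bigr => e _.
by rewrite mulrAC.
Qed.

Lemma size_ypoly x z : (size (ypoly x z) <= b.+1)%N.
Proof. by apply: size_sumX => e _; rewrite -ltnS. Qed.

Lemma coef_ypoly x z j : (ypoly x z)`_j = (xpoly z j).[x].
Proof.
rewrite /ypoly coef_sumX /xpoly horner_sumX; apply: eq_bigr => e _.
by rewrite mulrAC.
Qed.

Lemma size_xpoly z j : (size (xpoly z j) <= a.+1)%N.
Proof. by apply: size_sumX => e _; rewrite -ltnS. Qed.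

Lemma coef_xpoly z j i : (xpoly z j)`_i = (zpoly i j).[z].
Proof. by rewrite /xpoly coef_sumX /zpoly horner_sumX. Qed.

Lemma size_zpoly i j : (size (zpoly i j) <= c.+1)%N.
Proof. by apply: size_sumX => e _; rewrite -ltnS. Qed.

Lemma coef_zpoly (e0 : E) : (zpoly e0.1.1 e0.1.2)`_e0.2 = cf e0.
Proof.
rewrite /zpoly coef_sumX (big_pred1 e0) //.
case=> [[i j] k]; case: e0 => [[i0 j0] k0] /=.
symmetry; case: eqP => [[-> -> ->]|ne]; first by rewrite !eqxx.
symmetry; apply/negbTE/negP => /andP[/andP[ej ei] ek]; apply: ne.
by rewrite (val_inj (eqP ej)) (val_inj (eqP ei)) (val_inj (eqP ek)).

Qed.

Lemma evalV_xpoly P :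
  evalV cf P = \sum_(j < b.+1) (xpoly P.2 j).[P.1.1] * P.1.2 ^+ j.
Proof.
rewrite evalV_ypoly (horner_coef_wide _ (size_ypoly _ _)).
by apply: eq_bigr => j _; rewrite coef_ypoly.
Qed.

End CfPolys.

Section Plane.
Variables (F : finFieldType) (p : nat) (f : {poly {poly F}}) (eta a b c : nat).
Hypothesis chp : p \in [pchar F].
Local Notation E := ('I_a.+1 * 'I_b.+1 * 'I_c.+1)%type.
Variable cf : {ffun E -> F}.

Lemma shift_in_T (x y g : F) (k : nat) :
  ((x, y), g) \in Tset p f eta -> ((x, y + k%:R), g) \in Tset p f eta.
Proof. by rewrite !inE /= (frob_shift chp). Qed.

Lemma plane_count (g : F) (j0 : 'I_b.+1) :
  (a <= eta)%N -> g \in Gamma p f eta -> xpoly cf g j0 != 0 ->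
  ((eta - a) * (p - b) <=
     #|[set P in Tset p f eta | (P.2 == g) && (evalV cf P != 0%R)]|)%N.
Proof.
move=> ha gG xp0.
set B := [set P in Tset p f eta | _].
set A := [set ab.1 | ab in Zpts p f g].
have cA : (eta <= #|A|)%N by move: gG; rewrite inE => /andP[].
set R := [set x | (xpoly cf g j0).[x] == 0].
set A' := A :\: R.
have cR : (#|A :&: R| <= a)%N.
  apply: leq_trans (subset_leq_card (subsetIr A R)) _.
  apply: leq_trans (roots_card xp0 (size_xpoly _ _ _)).
  by apply: subset_leq_card; apply/subsetP => x; rewrite !inE.
have cA' : (eta - a <= #|A'|)%N.
  have e := cardsID R A.
  have -> : #|A'| = (#|A| - #|A :&: R|)%N by rewrite -e addKn.
  exact: leq_sub.
have inner : forall x, x \in A' -> (p - b <= #|[set P in B | P.1.1 == x]|)%N.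
  move=> x; rewrite !inE => /andP[xR /imsetP[[x1 y0] z0 /= ex]]; subst x1.
  have q0 : ypoly cf x g != 0.
    by apply: contraNneq xR => q0; rewrite -coef_ypoly q0 coef0.
  apply: leq_trans (fiber_count chp y0 q0 (size_ypoly _ _ _)) _.
  rewrite -(card_imset _ (f := fun k : 'I_p => ((x, y0 + k%:R), g))); last first.
    by move=> k1 k2 [] /addrI /(natr_ord_inj chp).
  apply: subset_leq_card; apply/subsetP => P /imsetP[k]; rewrite inE => qk ->.
  have T1 : ((x, y0 + k%:R), g) \in Tset p f eta.
    apply: shift_in_T; rewrite inE /=; move: z0; rewrite inE /= => -> /=.
    by move: gG; rewrite inE.
  by rewrite inE /B inE T1 /= !eqxx andbT (evalV_ypoly cf) /= qk.
apply: leq_trans (_ : (\sum_(x in A') (p - b) <= _)%N).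
  by rewrite sum_nat_const leq_mul2r cA' orbT.
clearbody B A' A R.
apply: (@leq_trans #|[set P in B | P.1.1 \in A']|); last first.
  by apply: subset_leq_card; apply/subsetP => P; rewrite inE => /andP[].
rewrite -sum1_card (partition_big (fun P => P.1.1) (mem A')) /=; last first.
  by move=> P; rewrite inE => /andP[].
apply: leq_sum => x xA; apply: leq_trans (inner x xA) _.
rewrite -sum1_card; apply: eq_leq; apply: eq_bigl => P.
by rewrite !in_set; case: (P.1.1 =P x) => [->|]; rewrite ?xA ?andbT ?andbF.
Qed.

End Plane.

From mathcomp Require Import ring.

Lemma lfun_punct (F : fieldType) n (I : {set 'I_n}) (v : 'rV[F]_n) :
  linfun (punct I) v = punct I v.
Proof.
have lin : linear (@punct F n I).
  by move=> k u w; apply/rowP => j; rewrite !mxE.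
pose fL : {linear _ -> _} := HB.pack (punct I) (GRing.isLinear.Build _ _ _ _ _ lin).
exact: (lfunE fL v).
Qed.

Section Code.
Variables (F : finFieldType) (T : {set F * F * F}) (a b c : nat).
Local Notation E := ('I_a.+1 * 'I_b.+1 * 'I_c.+1)%type.

Definition cfo (r : 'rV[F]_#|{: E}|) : {ffun E -> F} := [ffun e => r 0 (enum_rank e)].
Definition Lmap (r : 'rV[F]_#|{: E}|) : 'rV[F]_#|T| :=
  \row_t evalV (cfo r) (enum_val t).

Lemma Lmap_linear : linear Lmap.
Proof.
move=> k u w; apply/rowP => t; rewrite !mxE /evalV mulr_sumr -big_split.
by apply: eq_bigr => e _; rewrite !ffunE !mxE /= !mulrDl !mulrA.
Qed.

Lemma lfun_Lmap r : linfun Lmap r = Lmap r.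
Proof.
pose fL : {linear _ -> _} := HB.pack Lmap (GRing.isLinear.Build _ _ _ _ _ Lmap_linear).
exact: (lfunE fL r).
Qed.

Lemma expbox_mem (e : E) :
  ((e.1.1 : nat), (e.1.2 : nat), (e.2 : nat)) \in expbox a b c.
Proof.
apply: (allpairs_f (fun ij k => (ij, k))); last by rewrite mem_iota /= add0n.
by apply: allpairs_f; rewrite mem_iota /= add0n.
Qed.

Lemma Lmap_sum r :
  Lmap r = \sum_(e : E) cfo r e *: mono_ev T e.1.1 e.1.2 e.2.
Proof.
apply/rowP => t; rewrite !mxE summxE; apply: eq_bigr => e _.
by rewrite !mxE !mulrA.
Qed.

Lemma code_eq : code T a b c = limg (linfun Lmap).
Proof.
apply/eqP; rewrite eqEsubv; apply/andP; split.
  apply/span_subvP => v /mapP [[[i j] k] H ->] /=.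
  case/allpairsP: H => [[[i' j'] k'] [] H1 hk [] -> -> ->].
  case/allpairsP: H1 => [[i'' j''] [] hi hj [] -> ->].
  move: hi hj hk; rewrite !mem_iota /= !add0n => hi hj hk.
  set e0 : E := (Ordinal hi, Ordinal hj, Ordinal hk).
  pose r : 'rV[F]_#|{: E}| := \row_l ((l == enum_rank e0)%:R).
  have -> : mono_ev T i'' j'' k' = linfun Lmap r.
    rewrite lfun_Lmap Lmap_sum (bigD1 e0) //= big1 ?addr0.
      by rewrite ffunE mxE eqxx scale1r.
    move=> e ne; rewrite ffunE mxE (inj_eq enum_rank_inj).
    by rewrite (negbTE ne) scale0r.
  exact: memv_img (memvf _).
apply/subvP => v /memv_imgP [r _ ->]; rewrite lfun_Lmap Lmap_sum.
apply: memv_suml => e _; apply: memvZ; apply: memv_span.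
exact: (map_f (fun e => mono_ev T e.1.1 e.1.2 e.2) (expbox_mem e)).
Qed.

Lemma code_mem v : v \in code T a b c -> exists r, v = Lmap r.
Proof.
by rewrite code_eq => /memv_imgP [r _ ->]; exists r; rewrite lfun_Lmap.
Qed.

Lemma dim_code : (forall r, Lmap r = 0 -> r = 0) ->
  \dim (code T a b c) = (a.+1 * b.+1 * c.+1)%N.
Proof.
move=> inj; rewrite code_eq.
have := limg_ker_dim (linfun Lmap) fullv.
have /eqP -> : lker (linfun Lmap) == 0%VS.
  apply/lker0P => r1 r2; rewrite !lfun_Lmap => e.
  apply/eqP; rewrite -subr_eq0; apply/eqP; apply: inj.
  have := Lmap_linear (-1) r2 r1; rewrite scaleN1r (addrC (- r2)) => ->.
  by rewrite scaleN1r e addNr.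
rewrite capv0 dimv0 add0n => ->.
by rewrite dimvf /dim /= mul1n card_prod !card_prod !card_ord.
Qed.

End Code.

Lemma dim_le_span (F : fieldType) n (U : {vspace 'rV[F]_n}) (J : finType)
  (phi : J -> 'rV[F]_n) :
  (forall u, u \in U -> exists d : J -> F, u = \sum_j d j *: phi j) ->
  (\dim U <= #|J|)%N.
Proof.
move=> H.
have sub : (U <= <<[seq phi j | j <- enum J]>>)%VS.
  apply/subvP => u /H [d ->]; apply: memv_suml => j _; apply: memvZ.
  by apply: memv_span; apply: map_f; rewrite mem_enum.
apply: leq_trans (dimvS sub) _.
by apply: leq_trans (dim_span _) _; rewrite size_map -cardE.
Qed.

Section Main.
Variables (F : finFieldType) (p : nat) (f : {poly {poly F}}) (eta a b c : nat).
Hypothesis chp : p \in [pchar F].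
Hypothesis ha : (a <= eta)%N.
Local Notation E := ('I_a.+1 * 'I_b.+1 * 'I_c.+1)%type.
Local Notation T := (Tset p f eta).
Local Notation C := (code T a b c).

Lemma inj_cf (S : {set F}) (cf : {ffun E -> F}) :
  (0 < (eta - a) * (p - b))%N -> S \subset Gamma p f eta -> (c < #|S|)%N ->
  (forall P, P \in T -> evalV cf P = 0) -> cf = 0.
Proof.
move=> pos SG cS ev0.
have xz : forall g, g \in S -> forall j : 'I_b.+1, xpoly cf g j = 0.
  move=> g gS j; apply/eqP; apply: contraTT pos => nz; rewrite -leqNgt leqn0.
  have := plane_count chp ha (subsetP SG g gS) nz.
  set B := [set _ in _ | _].
  have -> : B = set0.
    apply/setP => P; rewrite [RHS]inE in_set; apply/negbTE/negP => /and3P[PT _].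
    by rewrite ev0 // eqxx.
  by rewrite cards0 leqn0.
apply/ffunP => e; rewrite ffunE -coef_zpoly.
have -> : zpoly cf e.1.1 e.1.2 = 0.
  apply: (roots_gt (size_zpoly cf _ _) cS) => g gS.
  by rewrite /root -coef_xpoly xz // coef0.
by rewrite coef0.
Qed.

Lemma pcode_mem (I : {set 'I_#|T|}) u : u \in pcode C I ->
  exists cf : {ffun E -> F}, forall s, u 0 s = evalV cf (enum_val (enum_val s)).
Proof.
case/memv_imgP => w /code_mem [r ->] ->; exists (cfo r) => s.
by rewrite lfun_punct !mxE.
Qed.

Lemma mindist_from (I : {set 'I_#|T|}) d :
  (forall cf : {ffun E -> F}, (exists s : 'I_#|I|, evalV cf (enum_val (enum_val s)) != 0) ->
     (d <= #|[set s : 'I_#|I| | evalV cf (enum_val (enum_val s)) != 0%R]|)%N) ->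
  min_dist_ge (pcode C I) d.
Proof.
move=> H u v uC vC neq.
have [cf ecf] := pcode_mem (memvB uC vC).
have -> : hdist u v = #|[set s : 'I_#|I| | evalV cf (enum_val (enum_val s)) != 0]|.
  by apply: eq_card => s; rewrite !inE -ecf !mxE subr_eq0.
apply: H; apply/existsP; apply: contraNT neq => /existsPn h.
by apply/eqP/rowP => s; apply/eqP; rewrite -subr_eq0; have := ecf s; rewrite !mxE => ->; apply/negPn; apply: h.
Qed.

Lemma shift_in_T' (P : F * F * F) (k : nat) :
  P \in T -> ((P.1.1, P.1.2 + k%:R), P.2) \in T.
Proof. by case: P => [[x y] z]; exact: shift_in_T. Qed.

Lemma fiber_mem (t0 t : 'I_#|T|) : t \in fiberpos p t0 ->
  exists k : 'I_p, enum_val t =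
    (((enum_val t0).1.1, (enum_val t0).1.2 + k%:R), (enum_val t0).2).
Proof. by rewrite inE => /imsetP [k _ ->]; exists k. Qed.

Lemma dim_fiber t0 : (\dim (pcode C (fiberpos p t0)) <= b.+1)%N.
Proof.
rewrite -[b.+1]card_ord.
apply: (dim_le_span (phi := fun j : 'I_b.+1 =>
  \row_(s < #|fiberpos p t0|) ((enum_val (enum_val s)).1.2 ^+ j))).
move=> u /pcode_mem [cf ecf].
exists (fun j : 'I_b.+1 => (ypoly cf (enum_val t0).1.1 (enum_val t0).2)`_j).
apply/rowP => s; rewrite ecf summxE.
have [k ek] := fiber_mem (enum_valP s).
rewrite (evalV_ypoly cf) ek /= (horner_coef_wide _ (size_ypoly _ _ _)).
by apply: eq_bigr => j _; rewrite !mxE ek.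
Qed.

Lemma dim_plane t0 : (\dim (pcode C (planepos t0)) <= a.+1 * b.+1)%N.
Proof.
apply: leq_trans (dim_le_span (J := ('I_b.+1 * 'I_a.+1)%type)
  (phi := fun ji => \row_(s < #|planepos t0|)
     ((enum_val (enum_val s)).1.1 ^+ ji.2 * (enum_val (enum_val s)).1.2 ^+ ji.1)) _) _;
  last by rewrite card_prod !card_ord mulnC.
move=> u /pcode_mem [cf ecf].
exists (fun ji : 'I_b.+1 * 'I_a.+1 => (xpoly cf (enum_val t0).2 ji.1)`_ji.2).
apply/rowP => s; rewrite ecf summxE.
have e2 : (enum_val (enum_val s)).2 = (enum_val t0).2.
  by have := enum_valP s; rewrite inE => /eqP.
rewrite (evalV_xpoly cf) e2.
under eq_bigr => j _ do
  rewrite (horner_coef_wide _ (size_xpoly cf _ _)) mulr_suml.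
rewrite pair_big; apply: eq_bigr => [[j i]] _ /=.
by rewrite !mxE mulrA.
Qed.

Lemma mindist_fiber t0 : (b <= p)%N ->
  min_dist_ge (pcode C (fiberpos p t0)) (p - b).
Proof.
move=> hb; apply: mindist_from => cf [s0 nz0].
have P0T : enum_val t0 \in T := enum_valP t0.
have [k0 ek0] := fiber_mem (enum_valP s0).
have q0 : ypoly cf (enum_val t0).1.1 (enum_val t0).2 != 0.
  apply: contraNneq nz0 => q0.
  by rewrite ek0 (evalV_ypoly cf) /= q0 horner0.
apply: leq_trans (fiber_count chp (enum_val t0).1.2 q0 (size_ypoly _ _ _)) _.
rewrite -(card_imset _ (f := fun k : 'I_p =>
   (((enum_val t0).1.1, (enum_val t0).1.2 + k%:R), (enum_val t0).2))); last first.
  by move=> k1 k2 [] /addrI /(natr_ord_inj chp).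
apply: card_positions => P /imsetP [k]; rewrite inE => qk ->.
  have PT := shift_in_T' k P0T.
  have [t et] := ev_surj PT; exists t => //.
  by rewrite inE et; apply/imsetP; exists k.
by rewrite (evalV_ypoly cf).
Qed.

Lemma mindist_plane t0 :
  min_dist_ge (pcode C (planepos t0)) ((eta - a) * (p - b)).
Proof.
apply: mindist_from => cf [s0 nz0].
have c0G : (enum_val t0).2 \in Gamma p f eta.
  by have := enum_valP t0; rewrite inE => /andP[].
have e2 : (enum_val (enum_val s0)).2 = (enum_val t0).2.
  by have := enum_valP s0; rewrite inE => /eqP.
have [j0 nzj] : exists j0 : 'I_b.+1, xpoly cf (enum_val t0).2 j0 != 0.
  apply/existsP; move: nz0; rewrite (evalV_xpoly cf) e2; apply: contraNT.
  move=> /existsPn h; apply/eqP; apply: big1 => j _.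
  by move/negPn/eqP: (h j) => ->; rewrite horner0 mul0r.
apply: leq_trans (plane_count chp ha c0G nzj) _.
apply: card_positions => P; rewrite in_set => /and3P [PT /eqP P2 nz] //.
have [t et] := ev_surj PT; exists t => //.
by rewrite inE et P2.
Qed.

End Main.

Unset Implicit Arguments.

Theorem theorem3p1 (F : finFieldType) (p h : nat) (f : {poly {poly F}})
  (eta nu rho1 rho2 rho3 : nat) :
  prime p -> odd p -> (0 < h)%N -> #|F| = (p ^ h)%N -> (0 < eta)%N ->
  (forall g, g \in Gamma p f eta -> (degZ p f g <= nu)%N) ->
  (2 <= rho1 <= eta)%N -> (2 <= rho2 <= p)%N -> (rho3 <= p ^ 2 - 1)%N ->
  (exists S : {set F},
     [/\ S \subset Gamma p f eta, (rho3.+1 <= #|S|)%N &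
         forall g, g \in S ->
           ((nu * ((eta - rho1) + (p - rho2))).+1 <= #|Zpts p f g|)%N]) ->
  let T := Tset p f eta in
  let C := code T (eta - rho1) (p - rho2) rho3 in
  (forall t0 : 'I_#|T|,
     let I2 := fiberpos p t0 in
     let I1 := planepos t0 in
     [/\ (\dim (pcode C I2) <= (p - rho2).+1)%N,
         min_dist_ge (pcode C I2) rho2,
         (\dim (pcode C I1) <= (eta - rho1).+1 * (p - rho2).+1)%N,
         min_dist_ge (pcode C I1) (rho1 * rho2) &
         I2 \subset I1])
  /\ (forall cf : {ffun 'I_(eta - rho1).+1 * 'I_(p - rho2).+1 * 'I_rho3.+1 -> F},
        (forall P, P \in T -> evalV cf P = 0) -> cf = 0)
  /\ \dim C = ((eta - rho1).+1 * (p - rho2).+1 * rho3.+1)%N.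
Proof.
move=> hp hodd hh HF heta Hnu /andP[r1 r1e] /andP[r2 r2p] hr3 [S [SG cS _]] T C.
have chp := card_finPcharP HF hp.
have ha : (eta - rho1 <= eta)%N := leq_subr _ _.
have hb : (p - rho2 <= p)%N := leq_subr _ _.
have ea : (eta - (eta - rho1))%N = rho1 := subKn r1e.
have eb : (p - (p - rho2))%N = rho2 := subKn r2p.
have pos : (0 < (eta - (eta - rho1)) * (p - (p - rho2)))%N.
  by rewrite ea eb muln_gt0 (leq_trans _ r1) ?(leq_trans _ r2).
have injcf : forall cf : {ffun 'I_(eta - rho1).+1 * 'I_(p - rho2).+1 * 'I_rho3.+1 -> F},
    (forall P, P \in T -> evalV cf P = 0) -> cf = 0.
  by move=> cf; apply: (inj_cf chp ha pos SG cS).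
split.
  move=> t0 I2 I1; split.
  - exact: dim_fiber.
  - by rewrite -[X in min_dist_ge _ X]eb; apply: mindist_fiber.
  - exact: dim_plane.
  - by rewrite -[X in min_dist_ge _ (X * _)]ea -[X in min_dist_ge _ (_ * X)]eb;
      apply: mindist_plane.
  - apply/subsetP => t /fiber_mem [k ek]; by rewrite inE ek /=.
split; first exact: injcf.
apply: dim_code => r Lr.
have cf0 : cfo r = 0.
  apply: injcf => P PT; have [t <-] := ev_surj PT.
  by have := congr1 (fun v : 'M[F]_(1, _) => v 0 t) Lr; rewrite !mxE.
apply/rowP => l; rewrite mxE.
by have := congr1 (fun g : {ffun _ -> F} => g (enum_val l)) cf0; rewrite !ffunE enum_valK.
Qed.
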